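(* Let $\omega\in\mathbb{F}_8$ be a root of $y^3+y+1$, so $\mathbb{F}_8=\mathbb{F}_2(\omega)$, and let $\mathcal{B}=\{1<\omega<\omega^2\}$ be the ordered basis of $\mathbb{F}_8$ over $\mathbb{F}_2$. Suppose $G=G_1+\omega G_2+\omega^2 G_3\in M_{k\times n}(\mathbb{F}_8)$, with $G_i\in M_{k\times n}(\mathbb{F}_2)$ for $1\le i\le 3$, generates a linear code $C$ over $\mathbb{F}_8$. Then the subfield code $C^{(2)}$ of $C$ with respect to $\mathcal{B}$ is the binary linear code generated by the $3k\times n$ matrix $$G^{(2)}=\begin{pmatrix}G_1\\ G_3\\ G_2\end{pmatrix}.$$ Moreover, if $D=D_1+\omega D_2+\omega^2 D_3\subseteq\mathbb{F}_8^m$ with $D_i\subseteq\mathbb{F}_2^m$ ($1\le i\le 3$), then $C_D^{(2)}=C_{D^{(2)}}$, where $$D^{(2)}=\{(d_1,d_3,d_2)\in(\mathbb{F}_2^m)^3 : d_i\in D_i,\ 1\le i\le 3\},$$ the coordinate of $C_{D^{(2)}}$ indexed by $(d_1,d_3,d_2)$ corresponding to the coordinate of $C_D$ indexed by $d_1+\omega d_2+\omega^2 d_3$.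
   Context: For sets $D_1,D_2,D_3\subseteq\mathbb{F}_2^m$, $D_1+\omega D_2+\omega^2D_3=\{d_1+\omega d_2+\omega^2 d_3: d_i\in D_i\}\subseteq\mathbb{F}_8^m$. For an ordered finite set $D\subseteq\mathbb{F}_q^m$, $C_D=\{(v\cdot d)_{d\in D}: v\in\mathbb{F}_q^m\}$, where $v\cdot d=\sum_{i=1}^m v_id_i$. Given a linear code $C$ over $\mathbb{F}_{q^r}$ with generator matrix $(g_{ij})$ and an ordered basis $\{b_1<\dots<b_r\}$ of $\mathbb{F}_{q^r}$ over $\mathbb{F}_q$, the subfield code $C^{(q)}$ is the $\mathbb{F}_q$-linear code generated by the matrix obtained by replacing each entry $g_{ij}$ by the column $(\mathrm{Tr}_{q^r/q}(g_{ij}b_1),\dots,\mathrm{Tr}_{q^r/q}(g_{ij}b_r))^T$; here $C_D^{(2)}$ denotes the subfield code of $C_D$. *)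

(* Defs.v *)
From HB Require Import structures.
From mathcomp Require Import all_boot all_order all_algebra all_field.
Set Implicit Arguments. Unset Strict Implicit. Unset Printing Implicit Defensive.
Import GRing.Theory.
Local Open Scope ring_scope.

(* Codes are represented extensionally: a word indexed by the finite
   coordinate set J is a function J -> F; a code is a predicate on words. *)

Definition in_span (F : fieldType) (I J : finType) (rows : I -> J -> F)
  (w : J -> F) : Prop :=
  exists x : I -> F, forall j, w j = \sum_(i : I) x i * rows i j.

Definition gen_code (F : fieldType) (I J : finType) (G : I -> J -> F) :=
  in_span G.

(* Absolute trace Tr_{F_8/F_2}(x) = x + x^2 + x^4 for a degree-3 extension
   L of F_2; the value lies in the prime field F_2 = <<1>>, and we read it
   off as the coordinate of x + x^2 + x^4 on the basis [1]. *)
Definition tr82 (L : fieldExtType 'F_2) (x : L) : 'F_2 :=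
  coord [tuple (1 : L)] ord0 (x + x ^+ 2 + x ^+ 4).

(* Subfield code C^(2) w.r.t. the ordered basis b_0 < b_1 < b_2 of L over F_2:
   the binary code generated by the matrix obtained from G by replacing each
   entry g_ij by the column (Tr(g_ij b_0), Tr(g_ij b_1), Tr(g_ij b_2))^T,
   i.e. whose rows are indexed by the pairs (i, l), l < 3. *)
Definition subfield_code (L : fieldExtType 'F_2) (b : 'I_3 -> L)
  (I J : finType) (G : I -> J -> L) : (J -> 'F_2) -> Prop :=
  gen_code (fun (p : I * 'I_3) (j : J) => tr82 (G p.1 j * b p.2)).

Definition dotv (F : fieldType) m (v d : 'rV[F]_m) : F := \sum_(i < m) v 0 i * d 0 i.

Definition C_D (F : fieldType) m (J : finType) (D : J -> 'rV[F]_m)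
  (w : J -> F) : Prop :=
  exists v : 'rV[F]_m, forall j, w j = dotv v (D j).

Definition gmat_CD (F : fieldType) m (J : finType) (D : J -> 'rV[F]_m) :
  'I_m -> J -> F := fun i j => D j 0 i.

Definition triples m (D1 D2 D3 : {set 'rV['F_2]_m}) :=
  {t : 'rV['F_2]_m * 'rV['F_2]_m * 'rV['F_2]_m |
     [&& t.1.1 \in D1, t.1.2 \in D2 & t.2 \in D3]}.

Definition comb3 (L : fieldExtType 'F_2) (w : L) m (d1 d2 d3 : 'rV['F_2]_m) :
  'rV[L]_m :=
  map_mx (in_alg L) d1 + w *: map_mx (in_alg L) d2 + w ^+ 2 *: map_mx (in_alg L) d3.

(* Main.v *)
Require Import Defs.
Set Implicit Arguments. Unset Strict Implicit.
From HB Require Import structures.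
From mathcomp Require Import all_boot all_order all_algebra all_field.
From mathcomp Require Import ring.
Import GRing.Theory.
Local Open Scope ring_scope.

Section S.
Variable L : fieldExtType 'F_2.

Lemma two0 : (2%:R : L) = 0.
Proof. have h : (2%:R : 'F_2) = 0 by apply/eqP. by rewrite -(scaler_nat 2 (1:L)) h scale0r. Qed.
Lemma addxx (x : L) : x + x = 0.
Proof. by rewrite -mulr2n -mulr_natr two0 mulr0. Qed.
Lemma sqD (x y : L) : (x + y) ^+ 2 = x ^+ 2 + y ^+ 2.
Proof. by rewrite sqrrD -mulr_natr two0 mulr0 addr0. Qed.
Definition T (x : L) := x + x ^+ 2 + (x ^+ 2) ^+ 2.
Lemma TD (x y : L) : T (x + y) = T x + T y.
Proof. rewrite /T !sqD. ring. Qed.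
Lemma F2sq (a : 'F_2) : a ^+ 2 = a.
Proof. by case: a => [[|[|//]]] ?; apply/val_inj. Qed.
Lemma TZ (a : 'F_2) (x : L) : T (a%:A * x) = a *: T x.
Proof.
have h (y : L) : (a%:A * y) ^+ 2 = a%:A * y ^+ 2.
  by rewrite exprMn -(rmorphXn (in_alg L)) /= F2sq.
by rewrite /T !h !mulr_algl !scalerDr.
Qed.
Lemma trE (x : L) : tr82 x = coord [tuple (1 : L)] ord0 (T x).
Proof. by rewrite /tr82 /T -exprM. Qed.
Lemma trD (x y : L) : tr82 (x + y) = tr82 x + tr82 y.
Proof. by rewrite !trE TD linearD. Qed.
Lemma trZ (a : 'F_2) (x : L) : tr82 (a%:A * x) = a * tr82 x.
Proof. by rewrite !trE TZ linearZ. Qed.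
Lemma tr0 (x : L) : T x = 0 -> tr82 x = 0.
Proof. by rewrite trE => ->; rewrite linear0. Qed.
Lemma tr1 (x : L) : T x = 1 -> tr82 x = 1.
Proof.
rewrite trE => ->.
have := @coord_free _ _ 1 [tuple (1:L)] ord0 ord0.
rewrite /= => ->; first by [].
by rewrite seq1_free oner_neq0.
Qed.
Variable w : L.
Hypothesis hw : w ^+ 3 + w + 1 = 0.
Lemma w3 : w ^+ 3 = w + 1.
Proof.
by rewrite -[LHS]addr0 -(addxx (w + 1)) (addrA (w ^+ 3)) (addrA (w ^+ 3) w 1) hw add0r.
Qed.
Lemma w4 : w ^+ 4 = w ^+ 2 + w.
Proof. by rewrite exprS w3 mulrDr mulr1 -expr2. Qed.
Lemma Tw : T w = 0.
Proof. by rewrite /T -exprM w4 [w ^+ 2 + w]addrC addxx. Qed.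
Lemma w22 : w ^+ (2 * 2) = w ^+ 2 + w.
Proof. exact: w4. Qed.
Lemma Tw2 : T (w ^+ 2) = 0.
Proof.
rewrite /T -!exprM /=.
have -> : (w ^+ (2 * 2 * 2)) = w.
  by rewrite exprM w22 sqD -exprM w22 [w ^+ 2 + w]addrC -addrA addxx addr0.
by rewrite w22 addrA addxx add0r addxx.
Qed.
Lemma T1 : T 1 = 1.
Proof. by rewrite /T !expr1n addxx add0r. Qed.
Lemma trw0 : tr82 (1 : L) = 1. Proof. exact: tr1 T1. Qed.
Lemma trw1 : tr82 w = 0. Proof. exact: tr0 Tw. Qed.
Lemma trw2 : tr82 (w ^+ 2) = 0. Proof. exact: tr0 Tw2. Qed.
Lemma trw3 : tr82 (w ^+ 3) = 1. Proof. by apply: tr1; rewrite w3 TD Tw T1 add0r. Qed.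
Lemma trw4 : tr82 (w ^+ 4) = 0. Proof. by apply: tr0; rewrite w4 TD Tw Tw2 addr0. Qed.

Lemma trcomb (a b c : 'F_2) (x y z : L) :
  tr82 (a%:A * x + b%:A * y + c%:A * z) = a * tr82 x + b * tr82 y + c * tr82 z.
Proof. by rewrite !trD !trZ. Qed.

Lemma key (a b c : 'F_2) (l : 'I_3) :
  tr82 ((a%:A + w * b%:A + w ^+ 2 * c%:A) * w ^+ l) =
  (if l == 0 :> nat then a else if l == 1 :> nat then c else b).
Proof.
case: l => [[|[|[|//]]]] ? /=.
- have -> : (a%:A + w * b%:A + w ^+ 2 * c%:A) * w ^+ 0 = a%:A * 1 + b%:A * w + c%:A * w ^+ 2 by ring.
  by rewrite trcomb trw0 trw1 trw2 !mulr0 !addr0 mulr1.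
- have -> : (a%:A + w * b%:A + w ^+ 2 * c%:A) * w ^+ 1 = a%:A * w + b%:A * w ^+ 2 + c%:A * w ^+ 3 by ring.
  by rewrite trcomb trw3 trw1 trw2 !mulr0 !add0r mulr1.
- have -> : (a%:A + w * b%:A + w ^+ 2 * c%:A) * w ^+ 2 = a%:A * w ^+ 2 + b%:A * w ^+ 3 + c%:A * w ^+ 4 by ring.
  by rewrite trcomb trw3 trw4 trw2 !mulr0 addr0 add0r mulr1.
Qed.
End S.

Lemma span_mono (F : fieldType) (I1 I2 J : finType) (r1 : I1 -> J -> F)
  (r2 : I2 -> J -> F) (f : I1 -> I2) (hf : forall i j, r1 i j = r2 (f i) j) w :
  in_span r1 w -> in_span r2 w.
Proof.
case=> x hx; exists (fun p => \sum_(i | f i == p) x i) => j.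
rewrite hx (partition_big f xpredT) //=.
apply: eq_bigr => p _; rewrite mulr_suml; apply: eq_bigr => i /eqP <-.
by rewrite hf.
Qed.

Arguments span_mono {F I1 I2 J r1 r2}.
Lemma span_ext (F : fieldType) (I J : finType) (r1 r2 : I -> J -> F)
  (h : forall i j, r1 i j = r2 i j) w : in_span r1 w <-> in_span r2 w.
Proof. split; [apply: (span_mono (fun i => i)) | apply: (span_mono (fun i => i))] => i j; by rewrite h. Qed.

Definition R3 (F : Type) k (J : Type) (A1 A2 A3 : 'I_k -> J -> F)
  (p : 'I_(k + (k + k))) (j : J) : F :=
  match split p with
  | inl i => A1 i j
  | inr q => match split q with inl i => A3 i j | inr i => A2 i j end
  end.

Arguments R3 {F k J}.
Lemma split_l m n (i : 'I_m) : split (lshift n i) = inl i.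
Proof. exact: (unsplitK (inl i)). Qed.
Lemma split_r m n (i : 'I_n) : split (rshift m i) = inr i.
Proof. exact: (unsplitK (inr i)). Qed.
Lemma gen (L : fieldExtType 'F_2) (w : L) (hw : w ^+ 3 + w + 1 = 0)
  k (J : finType) (A1 A2 A3 : 'I_k -> J -> 'F_2) c :
  in_span (fun (p : 'I_k * 'I_3) j =>
    tr82 (((A1 p.1 j)%:A + w * (A2 p.1 j)%:A + w ^+ 2 * (A3 p.1 j)%:A) * w ^+ p.2)) c
  <-> in_span (R3 A1 A2 A3) c.
Proof.
split.
- apply: (span_mono (fun p : 'I_k * 'I_3 =>
     if p.2 == 0 :> nat then lshift (k + k) p.1
     else if p.2 == 1 :> nat then rshift k (lshift k p.1)
     else rshift k (rshift k p.1))).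
  case=> i l j /=; rewrite (key hw).
  by case: l => [[|[|[|//]]]] ? /=; rewrite /R3 ?split_r ?split_l.
- apply: (span_mono (fun p : 'I_(k + (k + k)) =>
     match split p with
     | inl i => (i, @Ordinal 3 0 isT)
     | inr q => match split q with inl i => (i, @Ordinal 3 1 isT)
                | inr i => (i, @Ordinal 3 2 isT) end
     end)).
  move=> p j; rewrite /R3; case: (split p) => [i|q]; first by rewrite (key hw).
  by case: (split q) => [i|i]; rewrite (key hw).
Qed.

Lemma CD_span (F : fieldType) m (J : finType) (D : J -> 'rV[F]_m) c :
  C_D D c <-> in_span (fun (p : 'I_m) j => D j 0 p) c.
Proof.
split; case=> v hv.
- by exists (fun p => v 0 p) => j; rewrite hv.
- exists (\row_p v p) => j; rewrite hv /dotv; apply: eq_bigr => i _; by rewrite mxE.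
Qed.

Unset Implicit Arguments.
Theorem mainTheorem1 (L : fieldExtType 'F_2) (hdim : \dim (fullv : {vspace L}) = 3%N)
  (w : L) (hw : w ^+ 3 + w + 1 = 0) :
  (forall (k n : nat) (G1 G2 G3 : 'M['F_2]_(k, n)),
     forall c : 'I_n -> 'F_2,
       subfield_code (fun l : 'I_3 => w ^+ l)
         (fun (i : 'I_k) (j : 'I_n) =>
            (map_mx (in_alg L) G1 + w *: map_mx (in_alg L) G2
               + w ^+ 2 *: map_mx (in_alg L) G3) i j) c
       <-> gen_code (fun (i : 'I_(k + (k + k))) (j : 'I_n) =>
                       col_mx G1 (col_mx G3 G2) i j) c)
  /\
  (forall (m : nat) (D1 D2 D3 : {set 'rV['F_2]_m}),
     forall c : triples D1 D2 D3 -> 'F_2,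
       subfield_code (fun l : 'I_3 => w ^+ l)
         (gmat_CD (fun t : triples D1 D2 D3 =>
                     comb3 w (val t).1.1 (val t).1.2 (val t).2)) c
       <-> C_D (fun t : triples D1 D2 D3 =>
                  row_mx (val t).1.1 (row_mx (val t).2 (val t).1.2)) c).
Proof.
split.
- move=> k n G1 G2 G3 c; rewrite /subfield_code /gen_code.
  rewrite (span_ext (r2 := fun (p : 'I_k * 'I_3) j =>
    tr82 (((G1 p.1 j)%:A + w * (G2 p.1 j)%:A + w ^+ 2 * (G3 p.1 j)%:A) * w ^+ p.2))); last first.
    by move=> p j; rewrite !mxE.
  rewrite (gen hw (fun i j => G1 i j) (fun i j => G2 i j) (fun i j => G3 i j)).
  apply: span_ext => p j; rewrite /R3 -[in RHS](splitK p).
  case: (split p) => [i|q] /=; first by rewrite col_mxEu.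
  rewrite col_mxEd -[in RHS](splitK q).
  by case: (split q) => [i|i] /=; rewrite ?col_mxEu ?col_mxEd.
- move=> m D1 D2 D3 c; rewrite /subfield_code CD_span.
  apply: (iff_trans (span_ext (r2 := fun (p : 'I_m * 'I_3) (t : triples D1 D2 D3) =>
    tr82 ((((val t).1.1 0 p.1)%:A + w * ((val t).1.2 0 p.1)%:A
       + w ^+ 2 * ((val t).2 0 p.1)%:A) * w ^+ p.2)) _ _)).
    by move=> p j; rewrite /gmat_CD /comb3 !mxE.
  apply: (iff_trans (gen hw (fun i (t : triples D1 D2 D3) => (val t).1.1 0 i)
    (fun i (t : triples D1 D2 D3) => (val t).1.2 0 i)
    (fun i (t : triples D1 D2 D3) => (val t).2 0 i) c)).
  apply: span_ext => p j; rewrite /R3 -[in RHS](splitK p).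
  case: (split p) => [i|q] /=; first by rewrite row_mxEl.
  rewrite row_mxEr -[in RHS](splitK q).
  by case: (split q) => [i|i] /=; rewrite ?row_mxEl ?row_mxEr.
Qed.
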